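(* Let $A$ be a partially ordered set with a bottom element. Then for every set $S$ of passable games over $A$, a least upper bound of $S$ with respect to $\le$ exists and is equivalent to a passable game.
   Context: Games over a poset $A$ are defined inductively: for each $a\in A$ there is an atomic game $[a]$, which has no options; and if $L$ and $R$ are non-empty sets of games, then $\{L\mid R\}$ is a composite game with left options $L$ and right options $R$. The relations $\le$ and $\lhd$ are defined by simultaneous recursion: $G\le H$ iff (1) every left option $G^L$ of $G$ satisfies $G^L\lhd H$, (2) every right option $H^R$ of $H$ satisfies $G\lhd H^R$, and (3) if $G$ or $H$ is atomic then $G\lhd H$; and $G\lhd H$ iff (1) some right option $G^R$ of $G$ satisfies $G^R\le H$, or (2) some left option $H^L$ of $H$ satisfies $G\le H^L$, or (3) $G=[a]$, $H=[b]$ are atomic and $a\le b$. $G\equiv H$ means $G\le H$ and $H\le G$. A least upper bound of $S$ is a game $M$ with $H\le M$ for all $H\in S$ and $M\le M'$ whenever $H\le M'$ for all $H\in S$. A game $G$ is passable if $G\lhd G$ and recursively all its options are passable. *)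

(* Defs.v *)
(* Index types for sets of options.  Games form a proper class; a "set" of
   games is a family indexed by a type in this fixed universe. *)
Definition idx : Type := Type.

Inductive game (A : Type) : Type :=
| Atom (a : A)
| Comp (I J : idx) (hI : inhabited I) (hJ : inhabited J)
       (L : I -> game A) (R : J -> game A).

Arguments Atom {A} a.
Arguments Comp {A} I J hI hJ L R.

Definition is_atom {A : Type} (G : game A) : Prop :=
  match G with Atom _ => True | Comp _ _ _ _ _ _ => False end.

Section Rel.
Context {A : Type}.
Variable leA : A -> A -> Prop.

(* lelf G H = (G <= H, G <| H), by simultaneous recursion on (G, H). *)
Fixpoint lelf (G : game A) {struct G} : game A -> Prop * Prop :=
  fix aux (H : game A) {struct H} : Prop * Prop :=
    let lf : Prop :=
      (match G with
       | Atom _ => False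
       | Comp _ _ _ _ _ GR => exists j, fst (lelf (GR j) H)
       end)
      \/ (match H with
          | Atom _ => False
          | Comp _ _ _ _ HL _ => exists i, fst (aux (HL i))
          end)
      \/ (match G, H with
          | Atom a, Atom b => leA a b
          | _, _ => False
          end) in
    let le : Prop :=
      (match G with
       | Atom _ => True
       | Comp _ _ _ _ GL _ => forall i, snd (lelf (GL i) H)
       end)
      /\ (match H with
          | Atom _ => True
          | Comp _ _ _ _ _ HR => forall j, snd (aux (HR j))
          end)
      /\ (is_atom G \/ is_atom H -> lf) in
    (le, lf).

Definition game_le (G H : game A) : Prop := fst (lelf G H).
Definition game_lf (G H : game A) : Prop := snd (lelf G H).
Definition game_equiv (G H : game A) : Prop := game_le G H /\ game_le H G.

Definition is_lub {I : idx} (S : I -> game A) (M : game A) : Prop :=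
  (forall i, game_le (S i) M) /\
  (forall M', (forall i, game_le (S i) M') -> game_le M M').

Fixpoint passable (G : game A) : Prop :=
  game_lf G G /\
  match G with
  | Atom _ => True
  | Comp _ _ _ _ L R => (forall i, passable (L i)) /\ (forall j, passable (R j))
  end.

End Rel.

(* Main.v *)
Require Import Defs.
From Stdlib Require Import Classical.

Definition Lidx {A : Type} (G : game A) : idx :=
  match G with Atom _ => False | Comp X _ _ _ _ _ => X end.
Definition Ridx {A : Type} (G : game A) : idx :=
  match G with Atom _ => False | Comp _ Y _ _ _ _ => Y end.
Definition Lget {A : Type} (G : game A) : Lidx G -> game A :=
  match G as G0 return Lidx G0 -> game A with
  | Atom _ => fun f => False_rect _ f
  | Comp _ _ _ _ L _ => L end.
Definition Rget {A : Type} (G : game A) : Ridx G -> game A :=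
  match G as G0 return Ridx G0 -> game A with
  | Atom _ => fun f => False_rect _ f
  | Comp _ _ _ _ _ R => R end.

Definition atcmp {A : Type} (leA : A -> A -> Prop) (G H : game A) : Prop :=
  match G, H with Atom a, Atom b => leA a b | _, _ => False end.

Lemma le_unfold {A : Type} (leA : A -> A -> Prop) (G H : game A) :
  game_le leA G H <->
  ((forall l, game_lf leA (Lget G l) H) /\ (forall r, game_lf leA G (Rget H r)) /\
   (is_atom G \/ is_atom H -> game_lf leA G H)).
Proof.
  destruct G, H; cbn; firstorder; contradiction.
Qed.

Lemma lf_unfold {A : Type} (leA : A -> A -> Prop) (G H : game A) :
  game_lf leA G H <->
  ((exists r, game_le leA (Rget G r) H) \/ (exists l, game_le leA G (Lget H l)) \/
   atcmp leA G H).
Proof.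
  destruct G, H; cbn; firstorder.
Qed.

Lemma game_ind2 {A : Type} (P : game A -> Prop) :
  (forall G, (forall l, P (Lget G l)) -> (forall r, P (Rget G r)) -> P G) ->
  forall G, P G.
Proof.
  intros H G; induction G as [a|I J hI hJ L IHL R IHR].
  - apply H; intros [].
  - apply H; assumption.
Qed.


Lemma lf_L {A : Type} (leA : A -> A -> Prop) (X H : game A) l :
  game_le leA X (Lget H l) -> game_lf leA X H.
Proof. intro h; apply lf_unfold; right; left; exists l; exact h. Qed.

Lemma lf_R {A : Type} (leA : A -> A -> Prop) (G X : game A) r :
  game_le leA (Rget G r) X -> game_lf leA G X.
Proof. intro h; apply lf_unfold; left; exists r; exact h. Qed.

Lemma game_le_refl {A : Type} (leA : A -> A -> Prop) (le_refl : forall a, leA a a) :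
  forall G, game_le leA G G.
Proof.
  apply game_ind2; intros G IHL IHR.
  apply le_unfold; split; [|split].
  - intro l; apply (lf_L _ _ _ l); apply IHL.
  - intro r; apply (lf_R _ _ _ r); apply IHR.
  - intros [h|h]; destruct G; simpl in h; try contradiction;
    apply lf_unfold; right; right; apply le_refl.
Qed.

Lemma le_atoms {A : Type} (leA : A -> A -> Prop) a b :
  leA a b -> game_le leA (Atom a) (Atom b).
Proof.
  intro h; apply le_unfold; split; [intros []|split; [intros []|]].
  intros _; apply lf_unfold; right; right; exact h.
Qed.

Lemma game_trans {A : Type} (leA : A -> A -> Prop)
  (le_trans : forall a b c, leA a b -> leA b c -> leA a c) :
  forall G H K,
    (game_le leA G H -> game_le leA H K -> game_le leA G K) /\
    (game_lf leA G H -> game_le leA H K -> game_lf leA G K) /\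
    (game_le leA G H -> game_lf leA H K -> game_lf leA G K).
Proof.
  intro G; induction G as [G IHGL IHGR] using game_ind2.
  intro H; induction H as [H IHHL IHHR] using game_ind2.
  intro K; induction K as [K IHKL IHKR] using game_ind2.
  assert (T2 : game_lf leA G H -> game_le leA H K -> game_lf leA G K).
  { intros h1 h2.
    apply lf_unfold in h1; destruct h1 as [[r h1]|[[l h1]|h1]].
    - apply (lf_R _ _ _ r). apply (proj1 (IHGR r H K)); assumption.
    - apply le_unfold in h2; destruct h2 as [h2 _].
      apply (proj2 (proj2 (IHHL l K))); auto.
    - destruct G as [a|]; destruct H as [b|]; simpl in h1; try contradiction.
      pose proof h2 as h2'.
      apply le_unfold in h2; destruct h2 as [_ [_ h2]].
      specialize (h2 (or_intror I)) || specialize (h2 (or_introl I)).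
      apply lf_unfold in h2; destruct h2 as [[r _]|[[l h2]|h2]].
      + destruct r.
      + apply (lf_L _ _ _ l). apply (proj1 (IHKL l)); [apply le_atoms; exact h1|exact h2].
      + destruct K; simpl in h2; try contradiction.
        apply lf_unfold; right; right; simpl; eauto. }
  assert (T3 : game_le leA G H -> game_lf leA H K -> game_lf leA G K).
  { intros h1 h2.
    apply lf_unfold in h2; destruct h2 as [[r h2]|[[l h2]|h2]].
    - apply le_unfold in h1; destruct h1 as [_ [h1 _]].
      apply (proj1 (proj2 (IHHR r K))); auto.
    - apply (lf_L _ _ _ l). apply (proj1 (IHKL l)); assumption.
    - destruct H as [b|]; destruct K as [c|]; simpl in h2; try contradiction.
      apply le_unfold in h1; destruct h1 as [_ [_ h1]].
      specialize (h1 (or_intror I)).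
      apply lf_unfold in h1; destruct h1 as [[r h1]|[[l _]|h1]].
      + apply (lf_R _ _ _ r). apply (proj1 (IHGR r (Atom b) (Atom c))); [exact h1|].
        apply le_atoms; exact h2.
      + destruct l.
      + destruct G; simpl in h1; try contradiction.
        apply lf_unfold; right; right; simpl; eauto. }
  split; [|split]; try assumption.
  intros h1 h2.
  pose proof h1 as h1'; pose proof h2 as h2'.
  apply le_unfold in h1; apply le_unfold in h2.
  destruct h1 as [h1L [h1R h1A]]; destruct h2 as [h2L [h2R h2A]].
  apply le_unfold; split; [|split].
  - intro l. apply (proj1 (proj2 (IHGL l H K))); auto.
  - intro r. apply (proj2 (proj2 (IHKR r))); auto.
  - intros [h|h].
    + apply T2; auto.
    + apply T3; auto.
Qed.

Lemma bot_le {A : Type} (leA : A -> A -> Prop) bot (hb : forall a, leA bot a) :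
  forall H, game_le leA (Atom bot) H /\ game_lf leA (Atom bot) H.
Proof.
  apply game_ind2; intros H IHL IHR.
  assert (hf : game_lf leA (Atom bot) H).
  { destruct H as [c|X Y hX hY L R].
    - apply lf_unfold; right; right; apply hb.
    - destruct hX as [x]. apply lf_unfold; right; left; exists x; apply (IHL x). }
  split; [|exact hf].
  apply le_unfold; split; [intros []|split; [|intros _; exact hf]].
  intro r; apply (IHR r).
Qed.

Lemma botR_le {A : Type} (leA : A -> A -> Prop) bot (hb : forall a, leA bot a)
  (X : idx) (hX : inhabited X) (hu : inhabited unit) (L : X -> game A) (Y : game A) :
  (forall i, game_lf leA (L i) Y) ->
  game_le leA (Comp X unit hX hu L (fun _ => Atom bot)) Y.
Proof.
  intro h. apply le_unfold; split; [exact h|split].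
  - intro r. apply lf_unfold; left; exists tt; apply (bot_le leA bot hb).
  - intros _. apply lf_unfold; left; exists tt; apply (bot_le leA bot hb).
Qed.

Lemma passable_L {A : Type} (leA : A -> A -> Prop) (G : game A) :
  passable leA G -> forall l, passable leA (Lget G l).
Proof. destruct G; simpl; [intros _ []|]. intros [_ [h _]]; exact h. Qed.

Lemma passable_lf {A : Type} (leA : A -> A -> Prop) (G : game A) :
  passable leA G -> game_lf leA G G.
Proof. destruct G; simpl; tauto. Qed.

Theorem lemma6p4 (A : Type) (leA : A -> A -> Prop)
  (le_refl : forall a, leA a a)
  (le_antisym : forall a b, leA a b -> leA b a -> a = b)
  (le_trans : forall a b c, leA a b -> leA b c -> leA a c)
  (has_bot : exists bot, forall a, leA bot a) :
  forall (I : idx) (S : I -> game A),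
    (forall i, passable leA (S i)) ->
    exists M, is_lub leA S M /\
      exists P, passable leA P /\ game_equiv leA M P.
Proof.
  intros I S hS.
  destruct has_bot as [bot hb].
  destruct (classic (inhabited I)) as [hI|hnI].
  2:{ exists (Atom bot). split.
      - split.
        + intro i; exfalso; apply hnI; exact (inhabits i).
        + intros M' _; apply (bot_le leA bot hb).
      - exists (Atom bot). split.
        + simpl. split; [apply (bot_le leA bot hb)|exact Logic.I].
        + split; apply game_le_refl; exact le_refl. }
  pose (LI := (I + {i : I & Lidx (S i)})%type : idx).
  pose (LM := fun x : LI => match x with inl i => S i | inr (existT _ i l) => Lget (S i) l end).
  pose (D := Comp I unit hI (inhabits tt) S (fun _ => Atom bot)).
  assert (hLI : inhabited LI) by (destruct hI as [i]; exact (inhabits (inl i))).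
  pose (M := Comp LI unit hLI (inhabits tt) LM (fun _ => D)).
  assert (F1 : forall k, game_lf leA (S k) D).
  { intro k. apply lf_unfold; right; left; exists k. apply game_le_refl; exact le_refl. }
  assert (F2 : forall k, game_lf leA (S k) M).
  { intro k. apply lf_unfold; right; left; exists (inl k). apply game_le_refl; exact le_refl. }
  assert (T2 : forall G H K, game_lf leA G H -> game_le leA H K -> game_lf leA G K).
  { intros G H K; apply (game_trans leA le_trans G H K). }
  assert (hpM : passable leA M).
  { simpl. split; [|split].
    - apply lf_unfold; left; exists tt; cbv zeta. apply botR_le; [exact hb|]. exact F2.
    - intros [i|[i l]]; simpl; [apply hS|apply passable_L, hS].
    - intros _. simpl. split; [|split].
      + apply lf_unfold; left; exists tt; cbv zeta. apply (bot_le leA bot hb).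
      + exact hS.
      + intros _; simpl; split; [apply (bot_le leA bot hb)|exact Logic.I]. }
  exists M. split.
  - split.
    + intro k. apply le_unfold; split; [|split].
      * intro l. apply lf_unfold; right; left; exists (inr (existT _ k l)).
        apply game_le_refl; exact le_refl.
      * intro r. exact (F1 k).
      * intros _; exact (F2 k).
    + intros X hX. apply le_unfold; split; [|split].
      * intros [i|[k l]]; simpl.
        -- apply (T2 _ (S i)); [apply passable_lf, hS|apply hX].
        -- apply (T2 _ (S k)); [|apply hX].
           apply (lf_L _ _ _ l). apply game_le_refl; exact le_refl.
      * intro r. apply lf_unfold; left; exists tt; cbv zeta. apply botR_le; [exact hb|].
        intro k. pose proof (hX k) as h; apply le_unfold in h. apply h.
      * intros _. apply lf_unfold; left; exists tt; cbv zeta. apply botR_le; [exact hb|].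
        intro k. apply (T2 _ (S k)); [apply passable_lf, hS|apply hX].
  - exists M; split; [exact hpM|split; apply game_le_refl; exact le_refl].
Qed.
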